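(* Fix $\omega\in\{0,\infty\}$ and a network (finite directed multigraph with edge set $\mathcal E$, OD pairs $\mathcal I$, pairwise disjoint nonempty finite path sets $\mathcal P^i$) with nondecreasing edge functions $g_e:[0,\infty)\to[0,\infty)$, $g_e(0)=0$. Let $g:(0,\infty)\to(0,\infty)$ be $\rho$-regularly varying at $\omega$ with $\rho>0$ (i.e. $\lim_{t\to\omega}g(tx)/g(t)=x^\rho$ for all $x>0$) and such that $\alpha_e=\lim_{x\to\omega}g_e(x)/g(x)\in[0,\infty]$ exists for all $e$. Let $\alpha_p=\max_{e\in p}\alpha_e$ and $\alpha^i=\min_{p\in\mathcal P^i}\alpha_p$. Let $m_n=M_n\lambda_n$ be inflow vectors with $M_n>0$, $\lambda_n\in\Delta(\mathcal I)$, such that: (a) $M_n\to\omega$ and $\lambda_n\to\lambda\in\Delta(\mathcal I)$; (b) every OD pair has a path $p$ with $\alpha_p<\infty$; (c) there is $i\in\mathcal I$ with $0<\alpha^i<\infty$ and $\lambda^i>0$. Let $G_n=\min_{y\in\mathcal Y}\sum_{e\in\mathcal E}g_e(x_e(y,m_n))$. Then $\lim_{n\to\infty}G_n/g(M_n)=V_\rho(\lambda)$, where $V_\rho(\lambda)=\min_{y\in\mathcal Y}\sum_{e\in\mathcal E}\alpha_e\,\zeta_e(y,\lambda)^\rho\in(0,\infty)$ with the convention $\alpha_e\zeta_e^\rho=0$ when $\alpha_e=\infty$ and $\zeta_e=0$. Moreover, if $\bar y_n$ is a sequence of optimal solutions for $G_n$, every limit point of $(\bar y_n)$ is optimal fo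r $V_\rho(\lambda)$.
   Context: $\Delta(\mathcal I)$ is the probability simplex on $\mathcal I$. A normalized traffic allocation is $y=(y^i)_{i\in\mathcal I}$ with $y^i\in\Delta(\mathcal P^i)$ (nonnegative, summing to $1$); $\mathcal Y=\prod_i\Delta(\mathcal P^i)$. For $e\in\mathcal E$, $z_e^i(y)=\sum_{p\in\mathcal P^i,\,p\ni e}y^i_p$, $\zeta_e(y,\lambda)=\sum_i\lambda^iz_e^i(y)$, and for an inflow vector $m=M\lambda$, $x_e(y,m)=M\zeta_e(y,\lambda)=\sum_i m^iz^i_e(y)$. *)

(* Defs.v *)
From HB Require Import structures.
From mathcomp Require Import all_boot all_order all_algebra.
From mathcomp Require Import all_classical all_reals all_analysis.
Set Implicit Arguments. Unset Strict Implicit. Unset Printing Implicit Defensive.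
Import Order.TTheory GRing.Theory Num.Theory.
Import numFieldNormedType.Exports.
Local Open Scope classical_set_scope.
Local Open Scope ring_scope.

(* The point omega in {0, +oo}: [true] encodes +oo, [false] encodes 0.
   Limits "t -> omega" are taken along t -> +oo, resp. t -> 0^+
   (functions g, g_e are only defined on (0,oo) resp. [0,oo)). *)
Definition omega_nbhs (R : realType) (b : bool) : set_system R :=
  if b then pinfty_nbhs R else at_right (0 : R).

Fixpoint walk_from (V E : eqType) (tail head : E -> V) (u : V) (s : seq E) (v : V)
  : bool :=
  match s with
  | [::] => u == v
  | e :: s' => (tail e == u) && walk_from tail head (head e) s' v
  end.

Section Flows.
Variables (R : realType) (E I Pth : finType) (owner : Pth -> I) (route : Pth -> seq E).

Definition simplex (lam : I -> R) : Prop :=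
  (forall i, 0 <= lam i) /\ \sum_i lam i = 1.

Definition allocs : set (Pth -> R) :=
  [set y | (forall p, 0 <= y p) /\ forall i, \sum_(p | owner p == i) y p = 1].

Definition zfl (y : Pth -> R) (e : E) (i : I) : R :=
  \sum_(p | (owner p == i) && (e \in route p)) y p.

Definition zeta (y : Pth -> R) (lam : I -> R) (e : E) : R :=
  \sum_i lam i * zfl y e i.

Definition xload (y : Pth -> R) (m : I -> R) (e : E) : R :=
  \sum_i m i * zfl y e i.

Definition alpha_path (alpha : E -> \bar R) (p : Pth) : \bar R :=
  \big[maxe/0%E]_(e <- route p) alpha e.

Definition alpha_od (alpha : E -> \bar R) (i : I) : \bar R :=
  \big[mine/+oo%E]_(p | owner p == i) alpha_path alpha p.

Definition cost (ge : E -> R -> R) (m : I -> R) (y : Pth -> R) : R :=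
  \sum_e ge e (xload y m e).

(* G(m) = min_{y in Y} cost  (taken as infimum; equals the min when attained) *)
Definition Gopt (ge : E -> R -> R) (m : I -> R) : R :=
  inf [set cost ge m y | y in allocs].

(* limit objective  sum_e alpha_e zeta_e(y,lambda)^rho in \bar R;
   ereal multiplication satisfies +oo * 0 = 0, which is the stated convention *)
Definition Vobj (alpha : E -> \bar R) (rho : R) (lam : I -> R) (y : Pth -> R) : \bar R :=
  (\sum_e alpha e * ((zeta y lam e) `^ rho)%:E)%E.

Definition Vrho (alpha : E -> \bar R) (rho : R) (lam : I -> R) : \bar R :=
  ereal_inf [set Vobj alpha rho lam y | y in allocs].

End Flows.

(* Main.v *)
Require Import Defs.
From HB Require Import structures.
From mathcomp Require Import all_boot all_order all_algebra.
From mathcomp Require Import all_classical all_reals all_analysis.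
From mathcomp Require Import ring lra.
Import Order.TTheory GRing.Theory Num.Theory.
Import numFieldNormedType.Exports.
Local Open Scope classical_set_scope.
Local Open Scope ring_scope.


Lemma sum_upper (R : realType) (J : eqType) (T : Type) (G : set_system T) {FG : Filter G}
  (s : seq J) (t : J -> \bar R) (f : J -> T -> R) :
  (forall j, (0 <= t j)%E) ->
  (forall j c, (t j < c%:E)%E -> \forall x \near G, f j x < c) ->
  forall c, (\sum_(j <- s) t j < c%:E)%E -> \forall x \near G, \sum_(j <- s) f j x < c.
Proof.
move=> t0 H; elim: s => [|a s IH] c.
  by rewrite big_nil lte_fin => c0; apply: nearW => x; rewrite big_nil.
rewrite big_cons => hc.
have S0 : (0 <= \sum_(j <- s) t j)%E by apply: sume_ge0 => j _; apply: t0.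
case Ea : (t a) => [r| |] in hc *; last by have := t0 a; rewrite Ea.
- case Es : (\sum_(j <- s) t j) => [u| |] in hc S0 *; last by [].
  + rewrite -EFinD lte_fin in hc.
    set d := c - (r + u).
    have d0 : 0 < d by rewrite subr_gt0.
    have h1 : (t a < (r + d / 2)%:E)%E by rewrite Ea lte_fin ltrDl divr_gt0.
    have h2 : (\sum_(j <- s) t j < (u + d / 2)%:E)%E by rewrite Es lte_fin ltrDl divr_gt0.
    have := H a _ h1; have := IH _ h2; apply: filterS2 => x hs ha.
    rewrite big_cons; apply: (lt_le_trans (ltrD ha hs)).
    by rewrite /d le_eqVlt; apply/orP; left; apply/eqP; field.
  + by move: hc; rewrite addey.
- have Sn : (\sum_(j <- s) t j != -oo)%E.
    have : (-oo < \sum_(j <- s) t j)%E by apply: (lt_le_trans _ S0); exact: ltNy0.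
    by move/gt_eqF => ->.
  by move: hc; rewrite addye.
Qed.

Lemma sum_lower (R : realType) (J : eqType) (T : Type) (G : set_system T) {FG : Filter G}
  (D : T -> Prop) (s : seq J) (t : J -> \bar R) (f : J -> T -> R) :
  (forall j, (0 <= t j)%E) ->
  (forall j c, (c%:E < t j)%E -> \forall x \near G, D x -> c < f j x) ->
  forall c, (c%:E < \sum_(j <- s) t j)%E -> \forall x \near G, D x -> c < \sum_(j <- s) f j x.
Proof.
move=> t0 H; elim: s => [|a s IH] c.
  by rewrite big_nil lte_fin => c0; apply: nearW => x; rewrite big_nil.
rewrite big_cons => hc.
have S0 : (0 <= \sum_(j <- s) t j)%E by apply: sume_ge0 => j _; apply: t0.
suff [c1 [h1 [h2 ->]]] : exists c1, [/\ (c1%:E < t a)%E, ((c - c1)%:E < \sum_(j <- s) t j)%E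
      & c = c1 + (c - c1)].
  have := H a _ h1; have := IH _ h2; apply: filterS2 => x hs ha Dx.
  by rewrite big_cons; apply: ltrD; [apply: ha | apply: hs].
case Ea : (t a) => [r| |] in hc *; last by have := t0 a; rewrite Ea.
- case Es : (\sum_(j <- s) t j) => [u| |] in hc S0 *; last by [].
  + rewrite -EFinD lte_fin in hc.
    exists (r - (r + u - c) / 2); split.
    * by rewrite lte_fin gtrDl oppr_lt0 divr_gt0 // subr_gt0.
    * rewrite lte_fin; rewrite -subr_gt0.
      have -> : u - (c - (r - (r + u - c) / 2)) = (r + u - c) / 2 by field.
      by rewrite divr_gt0 // subr_gt0.
    * by rewrite addrC subrK.
  + exists (r - 1); split; first by rewrite lte_fin gtrDl oppr_lt0.
    * exact: ltry.
    * by rewrite addrC subrK.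
- exists (c + 1); split; first exact: ltry.
  + by apply: (lt_le_trans _ S0); rewrite lte_fin opprD addNKr oppr_lt0.
  + by rewrite addrC subrK.
Qed.

Lemma alpha_path_ge {R : realType} {E Pth : finType} {route : Pth -> seq E}
  {alpha : E -> \bar R} {p e} : e \in route p -> (alpha e <= alpha_path route alpha p)%E.
Proof.
rewrite /alpha_path; elim: (route p) => [//|a s IH].
rewrite in_cons big_cons => /orP [/eqP eqa|/IH h].
  rewrite eqa le_max; apply/orP; left; exact: Order.POrderTheory.le_refl.
by rewrite le_max h orbT.
Qed.

Lemma alpha_path_attained {R : realType} {E Pth : finType} {route : Pth -> seq E}
  {alpha : E -> \bar R} {p} : (0 < alpha_path route alpha p)%E ->
  exists2 e, e \in route p & alpha_path route alpha p = alpha e.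
Proof.
rewrite /alpha_path; elim: (route p) => [|a s IH]; first by rewrite big_nil ltxx.
rewrite big_cons => h.
have [le|lt] := leP (\big[maxe/0%E]_(j <- s) alpha j) (alpha a).
  by exists a; rewrite ?mem_head.
rewrite max_r ?ltW // in h *.
by have [e es ->] := IH h; exists e => //; rewrite in_cons es orbT.
Qed.

Lemma zetaE (R : realType) (E I Pth : finType) (owner : Pth -> I) (route : Pth -> seq E)
  (y : Pth -> R) (l : I -> R) e :
  zeta owner route y l e = \sum_(p | e \in route p) l (owner p) * y p.
Proof.
rewrite /zeta /zfl.
under eq_bigr do rewrite big_distrr /=.
rewrite (partition_big owner predT) //=.
apply: eq_bigr => i _; apply: eq_big => p; first by rewrite andbC.
by move=> /andP [/eqP -> _].
Qed.

Lemma xloadE (R : realType) (E I Pth : finType) (owner : Pth -> I) (route : Pth -> seq E)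
  (y : Pth -> R) (l : I -> R) (Mn : R) e :
  xload owner route y (fun i => Mn * l i) e = Mn * zeta owner route y l e.
Proof.
rewrite /xload /zeta big_distrr /=; apply: eq_bigr => i _; by rewrite mulrA.
Qed.

Lemma zeta_ge0 (R : realType) (E I Pth : finType) (owner : Pth -> I) (route : Pth -> seq E)
  (y : Pth -> R) (l : I -> R) e :
  (forall p, 0 <= y p) -> (forall i, 0 <= l i) -> 0 <= zeta owner route y l e.
Proof.
move=> hy hl; rewrite zetaE; apply: sumr_ge0 => p _; exact: mulr_ge0.
Qed.

Lemma omega_scale (R : realType) (T : Type) (F : set_system T) (FF : Filter F)
  (omega : bool) (h : T -> R) (z : R) : 0 < z -> (forall t, 0 < h t) ->
  h @ F --> omega_nbhs omega -> (fun t => h t * z) @ F --> omega_nbhs omega.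
Proof.
move=> z0 hpos; case: omega => /=.
  move=> /cvgryPge hy; apply/cvgryPge => A.
  have := hy (A / z); apply: filterS => t ht.
  by rewrite -(ler_pM2r z0) divfK ?gt_eqF // in ht.
move=> hc P /=. rewrite /at_right /within /=. move=> hP.
have hc0 : h @ F --> (0 : R).
  apply: (cvg_trans hc); exact: cvg_within.
have : (fun t => h t * z) @ F --> (0 : R).
  by rewrite -(mul0r z); apply: cvgMr_tmp.
move=> /(_ _ hP) H.
apply: (@filterS T F _ (fun t => 0 < h t * z -> P (h t * z))) H.
by move=> t /=; apply; rewrite mulr_gt0.
Qed.


Lemma asym (R : realType) (omega : bool) (g ge1 : R -> R) (rho : R) (a : \bar R)
  (M : nat -> R) :
  (forall x, 0 < x -> 0 < g x) ->
  (forall x, 0 < x -> (fun t => g (t * x) / g t) @ omega_nbhs omega --> x `^ rho) ->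
  ((fun x => (ge1 x / g x)%:E) @ omega_nbhs omega --> a) ->
  (forall n, 0 < M n) -> M @ \oo --> omega_nbhs omega ->
  forall z, 0 < z ->
  (fun n => (ge1 (M n * z) / g (M n))%:E) @ \oo --> (a * (z `^ rho)%:E)%E.
Proof.
move=> gpos grv ha Mpos Mc z z0.
have Mz : (fun t => M t * z) @ \oo --> omega_nbhs omega by apply: omega_scale.
have h1 : (fun n => (ge1 (M n * z) / g (M n * z))%:E) @ \oo --> a.
  have := (@cvg_comp _ _ _ (fun n => M n * z) (fun x => (ge1 x / g x)%:E) \oo (omega_nbhs omega) _ Mz ha).
  by [].
have h2 : (fun n => g (M n * z) / g (M n)) @ \oo --> z `^ rho.
  exact: (cvg_comp _ _ Mc (grv z z0)).
have h2' : (fun n => (g (M n * z) / g (M n))%:E) @ \oo --> (z `^ rho)%:E.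
  by apply/fine_cvgP; split; [apply: nearW | exact: h2].
have hdef : (a *? (z `^ rho)%:E)%E.
  have [fa|nfa] := boolP (a \is a fin_num).
    by apply: mule_def_fin.
  apply: mule_def_infty_neq0 => //.
  by rewrite eqe gt_eqF // powR_gt0.
have H3 : (fun n => (ge1 (M n * z) / g (M n * z))%:E * (g (M n * z) / g (M n))%:E)%E @ \oo --> (a * (z `^ rho)%:E)%E.
  exact: cvgeM.
apply: cvg_trans H3; apply: near_eq_cvg; apply: nearW => n /=.
rewrite -EFinM; congr (_%:E).
have g1 := gpos _ (Mpos n); have g2 := gpos _ (mulr_gt0 (Mpos n) z0).
by rewrite mulrA divfK // gt_eqF.
Qed.

Lemma powK {R : realType} {rho x : R} : 0 < rho -> 0 <= x -> (x `^ rho) `^ rho^-1 = x.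
Proof.
move=> r0 x0; rewrite -powRrM mulfV ?gt_eqF // powRr1 //.
Qed.

Lemma powK' {R : realType} {rho x : R} : 0 < rho -> 0 <= x -> (x `^ rho^-1) `^ rho = x.
Proof.
move=> r0 x0; rewrite -powRrM mulVf ?gt_eqF // powRr1 //.
Qed.

Lemma pow_upper (R : realType) (a z c rho : R) : 0 <= a -> 0 <= z -> 0 < rho ->
  a * z `^ rho < c -> exists z', z < z' /\ a * z' `^ rho < c.
Proof.
move=> a0 z0 r0 h.
have t0 : 0 <= a * z `^ rho by rewrite mulr_ge0 // powR_ge0.
set eta := (c - a * z `^ rho) / (a + 1).
have eta0 : 0 < eta by rewrite divr_gt0 // ?subr_gt0 // ltr_wpDl.
have w0 : 0 <= z `^ rho + eta by rewrite addr_ge0 ?powR_ge0 // ltW.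
exists ((z `^ rho + eta) `^ rho^-1); split.
  rewrite -{1}(powK r0 z0); apply: gt0_ltr_powR; rewrite ?invr_gt0 // ?nnegrE ?powR_ge0 //.
  by rewrite ltrDl.
rewrite powK' // mulrDr -subr_gt0.
have -> : c - (a * z `^ rho + a * eta) = (c - a * z `^ rho) / (a + 1).
  rewrite /eta; field; by rewrite gt_eqF // ltr_wpDl.
by rewrite divr_gt0 // ?subr_gt0 // ltr_wpDl.
Qed.

Lemma pow_lower (R : realType) (a z c rho : R) : 0 <= a -> 0 < z -> 0 < rho ->
  c < a * z `^ rho -> exists z', [/\ 0 < z', z' < z & c < a * z' `^ rho].
Proof.
move=> a0 z0 r0 h.
have [c0|c0] := ltP c 0.
  exists (z / 2); split; rewrite ?divr_gt0 // ?ltr_pdivrMr // ?ltr_pMr // ?ltr1n //.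
  by apply: (lt_le_trans c0); rewrite mulr_ge0 // powR_ge0.
have zr0 : 0 < z `^ rho by rewrite powR_gt0.
have ap : 0 < a.
  rewrite lt_neqAle a0 andbT; apply/eqP => a00; move: h; rewrite -a00 mul0r.
  by rewrite ltNge c0.
set eta := (a * z `^ rho - c) / (2 * a).
have pos : 0 < z `^ rho - eta.
  rewrite /eta -subr_gt0 in h *.
  have -> : z `^ rho - (a * z `^ rho - c) / (2 * a) = (a * z `^ rho + c) / (2 * a).
    by field; rewrite gt_eqF.
  by rewrite divr_gt0 // ?mulr_gt0 // ltr_wpDr // mulr_gt0.
exists ((z `^ rho - eta) `^ rho^-1); split.
- by rewrite powR_gt0.
- rewrite -{2}(powK r0 (ltW z0)); apply: gt0_ltr_powR; rewrite ?invr_gt0 // ?nnegrE ?powR_ge0 ?ltW //.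
  rewrite ltrBlDr ltrDl /eta divr_gt0 // ?mulr_gt0 //.
  by rewrite subr_gt0.
- rewrite powK' ?ltW // -subr_gt0.
  have -> : a * (z `^ rho - eta) - c = (a * z `^ rho - c) / 2.
    by rewrite /eta; field; rewrite gt_eqF.
  by rewrite divr_gt0 // subr_gt0.
Qed.

Lemma ereal_ev_lt {R : realType} {T : Type} {F : set_system T} {FF : Filter F}
  {f : T -> \bar R} {L c : \bar R} : f @ F --> L -> (L < c)%E ->
  \forall t \near F, (f t < c)%E.
Proof.
move=> H Lc; apply: (H [set u | (u < c)%E]); apply: open_nbhs_nbhs; split => //.
exact: open_ereal_lt_ereal.
Qed.

Lemma ereal_ev_gt {R : realType} {T : Type} {F : set_system T} {FF : Filter F}
  {f : T -> \bar R} {L c : \bar R} : f @ F --> L -> (c < L)%E ->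
  \forall t \near F, (c < f t)%E.
Proof.
move=> H Lc; apply: (H [set u | (c < u)%E]); apply: open_nbhs_nbhs; split => //.
exact: open_ereal_gt_ereal.
Qed.

Lemma sum_cvgR (R : realType) (J : eqType) (T : Type) (G : set_system T) {FG : Filter G}
  (s : seq J) (P : pred J) (t : J -> R) (f : J -> T -> R) :
  (forall j, f j x @[x --> G] --> t j) ->
  \sum_(j <- s | P j) f j x @[x --> G] --> \sum_(j <- s | P j) t j.
Proof.
move=> H; elim: s => [|a s IH].
  rewrite big_nil; under eq_fun do rewrite big_nil; exact: cvg_cst.
rewrite big_cons; under eq_fun do rewrite big_cons.
case: (P a) => //; exact: cvgD.
Qed.

Lemma ptws_eval (R : realType) (Pth : finType) (ys : {ptws Pth -> R}) (p : Pth) :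
  (fun y : {ptws Pth -> R} => y p) @ nbhs ys --> ys p.
Proof.
exact: (@proj_continuous Pth (fun _ => R) p ys).
Qed.

Lemma zeta_cvg (R : realType) (E I Pth : finType) (owner : Pth -> I) (route : Pth -> seq E)
  (T : Type) (F : set_system T) {FF : Filter F} (Y : T -> Pth -> R) (L : T -> I -> R)
  (y : Pth -> R) (l : I -> R) e :
  (forall p, Y t p @[t --> F] --> y p) -> (forall i, L t i @[t --> F] --> l i) ->
  zeta owner route (Y t) (L t) e @[t --> F] --> zeta owner route y l e.
Proof.
move=> hY hL; rewrite zetaE; under eq_fun do rewrite zetaE.
apply: sum_cvgR => p; apply: cvgM; [exact: hL | exact: hY].
Qed.

Lemma box_compact (R : realType) (Pth : finType) :
  compact [set y : {ptws Pth -> R} | forall p, `[(0:R), 1]%classic (y p)].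
Proof.
have H := (@tychonoff Pth (fun _ => R) (fun _ => `[(0:R), 1]%classic) (fun _ => @segment_compact R 0 1)).
exact H.
Qed.

Lemma lower_edge (R : realType) (omega : bool) (g ge1 : R -> R) (rho : R) (a : \bar R)
  (M : nat -> R) (T0 : Type) (G : set_system T0) {FG : Filter G}
  (N : T0 -> nat) (Zt : T0 -> R) (zs : R) (D : T0 -> Prop) :
  (forall x, 0 < x -> 0 < g x) ->
  (forall x, 0 < x -> (fun t => g (t * x) / g t) @ omega_nbhs omega --> x `^ rho) ->
  ((fun x => (ge1 x / g x)%:E) @ omega_nbhs omega --> a) ->
  (forall n, 0 < M n) -> M @ \oo --> omega_nbhs omega ->
  (forall x y, 0 <= x -> x <= y -> ge1 x <= ge1 y) ->
  (forall x, 0 <= x -> 0 <= ge1 x) ->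
  0 < rho -> (0 <= a)%E -> 0 <= zs ->
  N @ G --> \oo -> Zt @ G --> zs -> (forall q, D q -> 0 <= Zt q) ->
  forall c, (c%:E < a * (zs `^ rho)%:E)%E ->
  \forall q \near G, D q -> c < ge1 (M (N q) * Zt q) / g (M (N q)).
Proof.
move=> gpos grv ha Mpos Mc gmono gnn r0 a0 zs0 hN hZ hD c hc.
have [z0|zpos] := eqVneq zs 0.
  move: hc; rewrite z0 powR0 ?gt_eqF // mule0 lte_fin => c0.
  apply: nearW => q Dq; apply: (lt_le_trans c0).
  apply: divr_ge0; last exact: ltW (gpos _ (Mpos _)).
  by apply: gnn; apply: mulr_ge0; [exact: ltW (Mpos _) | exact: hD].
have zp : 0 < zs by rewrite lt_neqAle eq_sym zpos zs0.
have [z' [z'0 z'z hz']] : exists z', [/\ 0 < z', z' < zs & (c%:E < a * (z' `^ rho)%:E)%E].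
  case Ea : a => [r| |] in hc a0 *.
  - rewrite -EFinM lte_fin in hc.
    have [z' [h1 h2 h3]] := @pow_lower R r zs c rho a0 zp r0 hc.
    by exists z'; split => //; rewrite -EFinM lte_fin.
  - exists (zs / 2); split; rewrite ?divr_gt0 // ?ltr_pdivrMr // ?ltr_pMr // ?ltr1n //.
    by rewrite gt0_mulye ?ltry // lte_fin powR_gt0 // divr_gt0.
  - by [].
have A := @asym R omega g ge1 rho a M gpos grv ha Mpos Mc z' z'0.
have B : \forall n \near \oo, (c%:E < (ge1 (M n * z') / g (M n))%:E)%E.
  exact: ereal_ev_gt A hz'.
have B' : \forall q \near G, (c%:E < (ge1 (M (N q) * z') / g (M (N q)))%:E)%E.
  by have := hN _ B.
have C : \forall q \near G, z' < Zt q.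
  exact: cvgr_gt hZ _ z'z.
apply: filterS2 B' C => q h1 h2 Dq.
rewrite lte_fin in h1; apply: (lt_le_trans h1).
apply: ler_wpM2r; first by rewrite invr_ge0 ltW ?gpos.
apply: gmono; first by rewrite mulr_ge0 ?ltW ?Mpos.
by apply: ler_wpM2l; rewrite ?ltW ?Mpos.
Qed.

Lemma upper_edge (R : realType) (omega : bool) (g ge1 : R -> R) (rho : R) (a : \bar R)
  (M : nat -> R) (Zt : nat -> R) (zs : R) :
  (forall x, 0 < x -> 0 < g x) ->
  (forall x, 0 < x -> (fun t => g (t * x) / g t) @ omega_nbhs omega --> x `^ rho) ->
  ((fun x => (ge1 x / g x)%:E) @ omega_nbhs omega --> a) ->
  (forall n, 0 < M n) -> M @ \oo --> omega_nbhs omega ->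
  (forall x y, 0 <= x -> x <= y -> ge1 x <= ge1 y) ->
  ge1 0 = 0 ->
  0 < rho -> (0 <= a)%E -> 0 <= zs ->
  Zt @ \oo --> zs -> (forall n, 0 <= Zt n) -> (a = +oo%E -> forall n, Zt n = 0) ->
  forall c, (a * (zs `^ rho)%:E < c%:E)%E ->
  \forall n \near \oo, ge1 (M n * Zt n) / g (M n) < c.
Proof.
move=> gpos grv ha Mpos Mc gmono g0 r0 a0 zs0 hZ hZ0 hinf c hc.
have T0 : (0 <= a * (zs `^ rho)%:E)%E by rewrite mule_ge0 // lee_fin powR_ge0.
case Ea : a => [r| |] in hc a0 T0 hinf *.
- rewrite -EFinM lte_fin in hc.
  have [z' [h1 h2]] := @pow_upper R r zs c rho a0 zs0 r0 hc.
  have z'0 : 0 < z' by apply: le_lt_trans h1.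
  have A := @asym R omega g ge1 rho a M gpos grv ha Mpos Mc z' z'0.
  rewrite Ea in A.
  have B : \forall n \near \oo, ((ge1 (M n * z') / g (M n))%:E < c%:E)%E.
    by apply: ereal_ev_lt A _; rewrite -EFinM lte_fin.
  have C : \forall n \near \oo, Zt n < z' by exact: cvgr_lt hZ _ h1.
  apply: filterS2 B C => n hb hc'.
  rewrite lte_fin in hb; apply: le_lt_trans hb.
  apply: ler_wpM2r; first by rewrite invr_ge0 ltW ?gpos.
  apply: gmono; first by apply: mulr_ge0; [exact: ltW (Mpos n) | exact: hZ0].
  by apply: ler_wpM2l; [exact: ltW (Mpos n) | exact: ltW].
- apply: nearW => n; rewrite hinf // mulr0 g0 mul0r -lte_fin.
  exact: le_lt_trans T0 hc.
- by [].
Qed.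

Lemma ge0_lim {R : realType} {T : Type} {F : set_system T} {PF : ProperFilter F}
  {f : T -> \bar R} {a : \bar R} :
  (\forall x \near F, (0 <= f x)%E) -> f @ F --> a -> (0 <= a)%E.
Proof.
move=> h0 ha; rewrite leNgt; apply/negP => a0.
have H : \forall x \near F, (f x < 0)%E by exact: ereal_ev_lt ha a0.
have [x [h1 h2]] := filter_ex (filterI h0 H).
by move: (le_lt_trans h1 h2); rewrite ltxx.
Qed.

Lemma alpha_ge0 (R : realType) (omega : bool) (g ge1 : R -> R) (a : \bar R) :
  (forall x, 0 < x -> 0 < g x) -> (forall x, 0 <= x -> 0 <= ge1 x) ->
  ((fun x => (ge1 x / g x)%:E) @ omega_nbhs omega --> a) -> (0 <= a)%E.
Proof.
move=> gpos gnn; case: omega => /= ha.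
  apply: (ge0_lim _ ha).
  near=> x.
  have x0 : 0 < x by near: x; apply: nbhs_pinfty_gt; rewrite num_real.
  by rewrite lee_fin divr_ge0 ?gnn ?ltW ?gpos.
apply: (ge0_lim _ ha).
near=> x.
have x0 : 0 < x by near: x; exact: nbhs_right_gt.
by rewrite lee_fin divr_ge0 ?gnn ?ltW ?gpos.
Unshelve. all: by end_near.
Qed.

Lemma bigmine_le (R : realType) (J : eqType) (s : seq J) (P : pred J) (f : J -> \bar R) p :
  p \in s -> P p -> (\big[mine/+oo%E]_(q <- s | P q) f q <= f p)%E.
Proof.
elim: s => [//|a s IH]; rewrite in_cons big_cons => /orP [/eqP <-|ps] Pp.
  by rewrite Pp ge_min; apply/orP; left; exact: Order.POrderTheory.le_refl.
case: (P a); last exact: IH.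
by rewrite ge_min (IH ps Pp) orbT.
Qed.

Theorem lemmaB3 (R : realType) (omega : bool)
  (V E I Pth : finType) (tail head : E -> V) (orig dest : I -> V)
  (owner : Pth -> I) (route : Pth -> seq E)
  (* network: each path of P^i is an edge-simple walk from orig i to dest i *)
  (Hwalk : forall p, walk_from tail head (orig (owner p)) (route p) (dest (owner p)))
  (Hsimple : forall p, uniq (route p))
  (Hroute_inj : injective route)
  (Hnonempty : forall i : I, exists p : Pth, owner p = i)
  (* edge cost functions *)
  (ge : E -> R -> R)
  (Hge_mono : forall e x y, 0 <= x -> x <= y -> ge e x <= ge e y)
  (Hge_nonneg : forall e x, 0 <= x -> 0 <= ge e x)
  (Hge0 : forall e, ge e 0 = 0)
  (* g : (0,oo) -> (0,oo), rho-regularly varying at omega *)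
  (g : R -> R) (rho : R) (Hrho : 0 < rho)
  (Hg_pos : forall x, 0 < x -> 0 < g x)
  (Hg_rv : forall x, 0 < x ->
     (fun t => g (t * x) / g t) @ omega_nbhs omega --> x `^ rho)
  (alpha : E -> \bar R)
  (Halpha : forall e, (fun x => (ge e x / g x)%:E) @ omega_nbhs omega --> alpha e)
  (* inflows m_n = M_n lambda_n *)
  (M : nat -> R) (lam : nat -> I -> R) (lamlim : I -> R)
  (HM_pos : forall n, 0 < M n)
  (Hlam : forall n, simplex (lam n))
  (Hlamlim : simplex lamlim)
  (HM_cvg : M @ \oo --> omega_nbhs omega)
  (Hlam_cvg : forall i, (fun n => lam n i) @ \oo --> lamlim i)
  (Hb : forall i, exists p, owner p = i /\ (alpha_path route alpha p < +oo)%E)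
  (Hc : exists i, (0 < alpha_od owner route alpha i < +oo)%E /\ 0 < lamlim i) :
  let m n := fun i => M n * lam n i in
  let G n := Gopt owner route ge (m n) in
  (exists v : R,
     [/\ 0 < v, Vrho owner route alpha rho lamlim = v%:E &
         (fun n => G n / g (M n)) @ \oo --> v])
  /\
  (forall (ybar : nat -> Pth -> R),
     (forall n, allocs owner (ybar n)) ->
     (forall n, cost owner route ge (m n) (ybar n) = G n) ->
     forall (ystar : Pth -> R) (phi : nat -> nat),
       {homo phi : k l / (k < l)%N >-> (k < l)%N} ->
       (forall p, (fun k => ybar (phi k) p) @ \oo --> ystar p) ->
       allocs owner ystar /\
       Vobj owner route alpha rho lamlim ystar = Vrho owner route alpha rho lamlim).
Proof.
move=> m G.
have ynn : forall y : Pth -> R, allocs owner y -> forall p, 0 <= y p by move=> y [].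
have lamnn : forall n i, 0 <= lam n i by move=> n i; case: (Hlam n).
have limnn : forall i, 0 <= lamlim i by case: Hlamlim.
have gMpos : forall n, 0 < g (M n) by move=> n; exact: Hg_pos.
have alpha0 : forall e, (0 <= alpha e)%E.
  by move=> e; exact: (@alpha_ge0 R omega g (ge e) (alpha e) Hg_pos (fun x hx => Hge_nonneg e x hx) (Halpha e)).
have ratioE : forall n (y : Pth -> R), cost owner route ge (m n) y / g (M n) =
    \sum_e ge e (M n * zeta owner route y (lam n) e) / g (M n).
  by move=> n y; rewrite /cost mulr_suml; apply: eq_bigr => e _; rewrite /m xloadE.
have [pk hpk] := boolp.choice Hb.
have sum_pk : forall i, \sum_(p | owner p == i) ((p == pk i)%:R : R) = 1.
  move=> i; rewrite (bigD1 (pk i)) /=; last by rewrite (hpk i).1.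
  rewrite eqxx big1 ?addr0 // => p /andP [_ /negbTE ->] //.
have Zero : forall y : Pth -> R, (forall p e, alpha e = +oo%E -> e \in route p -> y p = 0) ->
    forall l e, alpha e = +oo%E -> zeta owner route y l e = 0.
  move=> y hy l e he; rewrite zetaE big1 // => p ep; by rewrite (hy p e he ep) mulr0.
have Vfin : forall y : Pth -> R, (forall p e, alpha e = +oo%E -> e \in route p -> y p = 0) ->
    (Vobj owner route alpha rho lamlim y < +oo)%E.
  move=> y hy; apply: lte_sum_pinfty => e _.
  case Ea : (alpha e) => [r| |].
  - by rewrite -EFinM ltry.
  - by rewrite (Zero y hy lamlim e Ea) powR0 ?gt_eqF // mule0 ltry.
  - by have := alpha0 e; rewrite Ea.
pose y0 : Pth -> R := fun p => (p == pk (owner p))%:R.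
have y0A : allocs owner y0.
  split; first by move=> p; rewrite /y0; case: (p == _).
  move=> i; rewrite -(sum_pk i); apply: eq_bigr => p /eqP <-; by [].
have y0G : forall p e, alpha e = +oo%E -> e \in route p -> y0 p = 0.
  move=> p e he ep; rewrite /y0; case: eqP => // hp.
  have := alpha_path_ge (alpha:=alpha) ep; rewrite he hp.
  by rewrite leNgt (hpk (owner p)).2.

have Vy0 := Vfin y0 y0G.
set Vr := Vrho owner route alpha rho lamlim.
set Vo := Vobj owner route alpha rho lamlim.
have VrS : forall y, allocs owner y -> (Vr <= Vo y)%E.
  by move=> y yA; apply: ereal_inf_lbound; exists y.
have [i0 [/andP [hA1 hA2] hl0]] := Hc.
case Ea0 : (alpha_od owner route alpha i0) => [a| |] in hA1 hA2; last by [].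
  2: by [].
rewrite lte_fin in hA1.
set N : R := #|Pth|%:R.
have N0 : 0 <= N by rewrite /N ler0n.
set k0 := lamlim i0 / (N + 1).
have k00 : 0 < k0 by rewrite divr_gt0 // ltr_wpDl.
set kap := a * k0 `^ rho.
have kap0 : 0 < kap by rewrite mulr_gt0 // powR_gt0.
have Vlow : forall y, allocs owner y -> (kap%:E <= Vo y)%E.
  move=> y yA.
  have [p [op yp]] : exists p, owner p = i0 /\ 1 / (N + 1) <= y p.
    case: (boolP [exists p, (owner p == i0) && (1 / (N + 1) <= y p)]).
      by move=> /existsP [p /andP [/eqP o h]]; exists p.
    move=> /existsPn H; exfalso.
    have H1 : \sum_(p | owner p == i0) y p <= \sum_(p | owner p == i0) (1 / (N + 1)).
      by apply: ler_sum => p /eqP o; have := H p; rewrite o eqxx /= -ltNge => /ltW.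
    have H2 : \sum_(p | owner p == i0) (1 / (N + 1)) <= \sum_(p : Pth) (1 / (N + 1)).
      rewrite [X in _ <= X](bigID (fun p => owner p == i0)) /= lerDl.
      by apply: sumr_ge0 => p _; rewrite divr_ge0 // ltW // ltr_wpDl.
    move: H1; rewrite yA.2 => H1.
    have := le_trans H1 H2; rewrite sumr_const -/N -mulr_natl -/N.
    by rewrite mul1r ler_pdivlMr ?ltr_wpDl // mul1r => h; lra.
  have Aod : (alpha_od owner route alpha i0 <= alpha_path route alpha p)%E.
    rewrite /alpha_od; have := (@bigmine_le R Pth (index_enum Pth) (fun q => owner q == i0) (alpha_path route alpha) p); rewrite mem_index_enum op eqxx; apply => //.
  have Ap : (0 < alpha_path route alpha p)%E by rewrite (lt_le_trans _ Aod) // Ea0 lte_fin.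
  have [e ep Ae] := alpha_path_attained Ap.
  have Zk : k0 <= zeta owner route y lamlim e.
    rewrite zetaE (bigD1 p) //=.
    have hrest : 0 <= \sum_(q | (e \in route q) && (q != p)) lamlim (owner q) * y q.
      by apply: sumr_ge0 => q _; rewrite mulr_ge0 // ynn.
    have hmain : k0 <= lamlim (owner p) * y p.
      rewrite op /k0; rewrite mul1r in yp.
      by apply: ler_wpM2l; [exact: limnn | exact: yp].
    lra.
  have Zge0 : 0 <= zeta owner route y lamlim e.
    by apply: zeta_ge0 => //; apply: ynn.
  rewrite /Vo /Vobj (bigD1 e) //=.
  apply: (le_trans _ (leeDl _ _)); last first.
    by apply: sume_ge0 => e' _; rewrite mule_ge0 // lee_fin powR_ge0.
  rewrite /kap EFinM; apply: lee_pmul.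
  - by rewrite lee_fin ltW.
  - by rewrite lee_fin powR_ge0.
  - by rewrite -Ae -Ea0.
  - rewrite lee_fin; apply: ge0_ler_powR => //; rewrite ?nnegrE ?ltW //.

have Vkap : (kap%:E <= Vr)%E by apply: le_ereal_inf_tmp => _ [y yA <-]; exact: Vlow.
have Vfinite : Vr \is a fin_num.
  rewrite ge0_fin_numE; first exact: le_lt_trans (VrS y0 y0A) Vy0.
  by apply: le_trans Vkap; rewrite lee_fin ltW.
set v := fine Vr.
have hV : Vr = v%:E by rewrite /v fineK.
have v0 : 0 < v by rewrite -lte_fin -hV; apply: lt_le_trans Vkap; rewrite lte_fin.
have cost0 : forall n (y : Pth -> R), allocs owner y -> 0 <= cost owner route ge (m n) y.
  move=> n y yA; rewrite /cost; apply: sumr_ge0 => e _; apply: Hge_nonneg.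
  rewrite /m xloadE; apply: mulr_ge0; first exact: ltW (HM_pos n).
  by apply: zeta_ge0 => //; apply: ynn.
have Ginf : forall n (y : Pth -> R), allocs owner y -> G n <= cost owner route ge (m n) y.
  move=> n y yA; rewrite /G /Gopt; apply: ge_inf; last by exists y.
  by exists 0 => _ [z zA <-]; exact: cost0.
have Upper : forall d, 0 < d -> \forall n \near \oo, G n / g (M n) < v + d.
  move=> d d0.
  have [y yA hy] : exists2 y, allocs owner y & (Vo y < (v + d)%:E)%E.
    have : (Vr < (v + d)%:E)%E by rewrite hV lte_fin ltrDl.
    by move/ereal_inf_lt => [_ [y yA <-] h]; exists y.
  pose y' := fun p => if 0 < lamlim (owner p) then y p else y0 p.
  have y'A : allocs owner y'.
    split; first by move=> p; rewrite /y'; case: ifP => _; [exact: ynn | exact: y0A.1].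
    move=> i; case: (boolP (0 < lamlim i)) => hi.
      by rewrite -(yA.2 i); apply: eq_bigr => p /eqP op; rewrite /y' op hi.
    by rewrite -(y0A.2 i); apply: eq_bigr => p /eqP op; rewrite /y' op (negbTE hi).
  have Zeq : forall e, zeta owner route y' lamlim e = zeta owner route y lamlim e.
    move=> e; rewrite !zetaE; apply: eq_bigr => p _; rewrite /y'; case: ifP => // hp.
    have -> : lamlim (owner p) = 0 by apply/eqP; rewrite eq_le limnn andbT leNgt hp.
    by rewrite !mul0r.
  have Vy' : Vo y' = Vo y by rewrite /Vo /Vobj; apply: eq_bigr => e _; rewrite Zeq.
  have y'G : forall p e, alpha e = +oo%E -> e \in route p -> y' p = 0.
    move=> p e he ep; rewrite /y'; case: ifP => hp; last exact: y0G he ep.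
    have fin : (alpha e * ((zeta owner route y lamlim e) `^ rho)%:E < +oo)%E.
      apply: le_lt_trans (lt_trans hy (ltry _)).
      rewrite /Vo /Vobj (bigD1 e) //=; apply: leeDl.
      by apply: sume_ge0 => e' _; rewrite mule_ge0 // lee_fin powR_ge0.
    have Zn : 0 <= zeta owner route y lamlim e by apply: zeta_ge0 => //; apply: ynn.
    have Z0 : zeta owner route y lamlim e = 0.
      apply/eqP; apply: contraTT fin => hz.
      rewrite he gt0_mulye ?ltxx // lte_fin powR_gt0 //.
      by rewrite lt_neqAle eq_sym hz Zn.
    move: Z0; rewrite zetaE => Z0.
    have := psumr_eq0P (fun q _ => mulr_ge0 (limnn _) (ynn _ yA q)) Z0 ep.
    move=> /eqP.
    by rewrite mulf_eq0 gt_eqF //= => /eqP.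
  have Vy'lt : (\sum_e alpha e * ((zeta owner route y' lamlim e) `^ rho)%:E < (v + d)%:E)%E.
    by move: hy; rewrite -Vy'.
  have hsum : \forall n \near \oo,
      \sum_e ge e (M n * zeta owner route y' (lam n) e) / g (M n) < v + d.
    apply: (@sum_upper R E nat \oo _ (index_enum E)
      (fun e => alpha e * ((zeta owner route y' lamlim e) `^ rho)%:E)%E
      (fun e n => ge e (M n * zeta owner route y' (lam n) e) / g (M n))) => //.
      by move=> e; rewrite mule_ge0 // lee_fin powR_ge0.
    move=> e c hc.
    have Zs0 : 0 <= zeta owner route y' lamlim e by apply: zeta_ge0 => //; apply: ynn.
    have Zn0 : forall n, 0 <= zeta owner route y' (lam n) e.
      by move=> n; apply: zeta_ge0 => //; apply: ynn.
    have Zcvg : (fun n => zeta owner route y' (lam n) e) @ \oo --> zeta owner route y' lamlim e.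
      by apply: (@zeta_cvg R E I Pth owner route nat \oo _ (fun _ => y') lam) => [p|i];
        [exact: cvg_cst | exact: Hlam_cvg].
    exact: (@upper_edge R omega g (ge e) rho (alpha e) M
      (fun n => zeta owner route y' (lam n) e) (zeta owner route y' lamlim e)
      Hg_pos Hg_rv (Halpha e) HM_pos HM_cvg (Hge_mono e) (Hge0 e) Hrho (alpha0 e) Zs0 Zcvg Zn0
      (fun he n => Zero y' y'G (lam n) e he) c hc).
  apply: filterS hsum => n hn; apply: le_lt_trans hn.
  by rewrite -ratioE ler_pM2r ?invr_gt0 //; exact: Ginf.

have allocsK : forall y : Pth -> R, allocs owner y -> forall p, 0 <= y p /\ y p <= 1.
  move=> y yA p; split; first exact: ynn.
  rewrite -(yA.2 (owner p)) (bigD1 p) //= lerDl.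
  by apply: sumr_ge0 => q _; exact: ynn.
have Lower : forall d, 0 < d -> \forall n \near \oo, v - d < G n / g (M n).
  move=> d d0.
  pose K := [set y : {ptws Pth -> R} | forall p, `[(0:R), 1]%classic (y p)].
  have cK : compact K := box_compact R Pth.
  have H : \forall n \near \oo, K `<=` (fun y : {ptws Pth -> R} =>
      allocs owner y -> v - d / 2 < cost owner route ge (m n) y / g (M n)).
    apply: ((compact_near_coveringP K).1 cK nat \oo
      (fun n (y : {ptws Pth -> R}) => allocs owner y -> v - d / 2 < cost owner route ge (m n) y / g (M n))) => //.
    move=> ys Kys.
    have ys0 : forall p, 0 <= ys p.
      by move=> p; have := Kys p; rewrite /= in_itv /= => /andP [].
    case: (pselect (allocs owner ys)) => [ysA | ysN].
      have hc : ((v - d / 2)%:E < \sum_e alpha e * ((zeta owner route ys lamlim e) `^ rho)%:E)%E.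
        apply: (lt_le_trans _ (VrS ys ysA)); rewrite hV lte_fin.
        by rewrite ltrBlDr ltrDl divr_gt0.
      have Hs := @sum_lower R E ({ptws Pth -> R} * nat)%type (filter_prod (nbhs ys) \oo) _
        (fun q => allocs owner q.1) (index_enum E)
        (fun e => alpha e * ((zeta owner route ys lamlim e) `^ rho)%:E)%E
        (fun e q => ge e (M q.2 * zeta owner route q.1 (lam q.2) e) / g (M q.2)).
      have Hs' : \forall q \near filter_prod (nbhs ys) \oo, allocs owner q.1 ->
          v - d / 2 < \sum_e ge e (M q.2 * zeta owner route q.1 (lam q.2) e) / g (M q.2).
        apply: Hs hc.
          by move=> e; rewrite mule_ge0 // lee_fin powR_ge0.
        move=> e c hc'.
        have Zs0 : 0 <= zeta owner route ys lamlim e by apply: zeta_ge0.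
        have Zcvg : (fun q : {ptws Pth -> R} * nat => zeta owner route q.1 (lam q.2) e)
            @ filter_prod (nbhs ys) \oo --> zeta owner route ys lamlim e.
          apply: (@zeta_cvg R E I Pth owner route _ _ _ (fun q => q.1) (fun q => lam q.2)) => [p|i].
            exact: (cvg_comp _ _ cvg_fst (ptws_eval _ _ ys p)).
          exact: (cvg_comp _ _ cvg_snd (Hlam_cvg i)).
        apply: (@lower_edge R omega g (ge e) rho (alpha e) M _ _ _ snd
          (fun q => zeta owner route q.1 (lam q.2) e) (zeta owner route ys lamlim e)
          (fun q => allocs owner q.1)
          Hg_pos Hg_rv (Halpha e) HM_pos HM_cvg (Hge_mono e) (Hge_nonneg e) Hrho (alpha0 e) Zs0
          cvg_snd Zcvg _ c hc').
        by move=> q qA; apply: zeta_ge0 => //; apply: ynn.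
      apply: filterS Hs' => q hq hA.
      by rewrite ratioE; apply: hq.
    have [i hi] : exists i, \sum_(p | owner p == i) ys p != 1.
      case: (boolP [forall i, \sum_(p | owner p == i) ys p == 1]).
        by move=> /forallP h; exfalso; apply: ysN; split => // i; apply/eqP.
      by move=> /forallPn [i hi]; exists i.
    have Scvg : (fun y : {ptws Pth -> R} => \sum_(p | owner p == i) y p) @ nbhs ys
        --> \sum_(p | owner p == i) ys p.
      by apply: sum_cvgR => p; exact: ptws_eval.
    have Hne : \forall y \near ys, \sum_(p | owner p == i) y p != 1.
      case: (ltgtP (\sum_(p | owner p == i) ys p) 1) => h.
      - by apply: filterS (cvgr_lt _ Scvg 1 h) => y hy; rewrite lt_eqF.
      - by apply: filterS (cvgr_gt _ Scvg 1 h) => y hy; rewrite gt_eqF.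
      - by move: hi; rewrite h eqxx.
    have Hna : \forall y \near ys, ~ allocs owner y.
      by apply: filterS Hne => y hy [_ h]; move: hy; rewrite h eqxx.
    have Hna2 : \forall q \near filter_prod (nbhs ys) \oo, ~ allocs owner q.1.
      exact: (@filter_prod1 _ _ (nbhs ys) \oo _ _ Hna).
    by apply: filterS Hna2 => q hq hA; exfalso; apply: hq.
  apply: filterS H => n Hn.
  have gp := gMpos n.
  have lb : lbound [set cost owner route ge (m n) y | y in allocs owner] ((v - d / 2) * g (M n)).
    move=> _ [y yA <-].
    have Ky : K y by move=> p; rewrite /= in_itv /=; apply/andP; exact: allocsK.
    by have := Hn y Ky yA; rewrite ltr_pdivlMr // => /ltW.
  have hG : (v - d / 2) * g (M n) <= G n.
    by rewrite /G /Gopt; apply: lb_le_inf => //; exists (cost owner route ge (m n) y0), y0.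
  rewrite ltr_pdivlMr //; apply: lt_le_trans hG.
  by rewrite ltr_pM2r //; lra.
have Gcvg : (fun n => G n / g (M n)) @ \oo --> v.
  apply/cvgrPdist_lt => eps eps0.
  apply: filterS2 (Upper eps eps0) (Lower eps eps0) => n h1 h2.
  by rewrite ltr_distlC h1 h2.
split; first by exists v; split.
move=> ybar ybA ybopt ystar phi phimono ycv.
have phik : forall k, (k <= phi k)%N.
  elim=> [|k IH] //; apply: leq_ltn_trans IH _; exact: phimono.
have phicvg : phi @ \oo --> \oo.
  move=> S [N1 _ hS]; exists N1 => // k /= hk; apply: hS; exact: leq_trans hk (phik k).
have ysA : allocs owner ystar.
  split.
    move=> p; rewrite leNgt; apply/negP => hlt.
    have : \forall k \near \oo, ybar (phi k) p < 0 by exact: cvgr_lt _ (ycv p) 0 hlt.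
    move=> /filter_ex [k hk].
    by move: (ynn _ (ybA (phi k)) p); rewrite leNgt hk.
  move=> i.
  have S : (fun k => \sum_(p | owner p == i) ybar (phi k) p) @ \oo --> \sum_(p | owner p == i) ystar p.
    by apply: sum_cvgR => p; exact: ycv.
  apply/eqP; case: (ltgtP (\sum_(p | owner p == i) ystar p) 1) => // h.
  - have : \forall k \near \oo, \sum_(p | owner p == i) ybar (phi k) p < 1.
      exact: cvgr_lt _ S 1 h.
    move=> /filter_ex [k hk].
    by move: hk; rewrite (ybA (phi k)).2 ltxx.
  - have : \forall k \near \oo, 1 < \sum_(p | owner p == i) ybar (phi k) p.
      exact: cvgr_gt _ S 1 h.
    move=> /filter_ex [k hk].
    by move: hk; rewrite (ybA (phi k)).2 ltxx.
split => //.
apply/eqP; rewrite eq_le; apply/andP; split; last exact: VrS.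
rewrite hV leNgt; apply/negP => hlt.
have [c [vc hc]] : exists c, v < c /\ (c%:E < Vo ystar)%E.
  case Eo : (Vo ystar) => [w| |] in hlt *.
  - exists ((v + w) / 2); rewrite lte_fin in hlt; rewrite lte_fin; split; lra.
  - by exists (v + 1); split; [rewrite ltrDl | exact: ltry].
  - by [].
have Hs := @sum_lower R E nat \oo _ (fun _ => True) (index_enum E)
  (fun e => alpha e * ((zeta owner route ystar lamlim e) `^ rho)%:E)%E
  (fun e k => ge e (M (phi k) * zeta owner route (ybar (phi k)) (lam (phi k)) e) / g (M (phi k))).
have Hs' : \forall k \near \oo, True ->
    c < \sum_e ge e (M (phi k) * zeta owner route (ybar (phi k)) (lam (phi k)) e) / g (M (phi k)).
  apply: Hs hc.
    by move=> e; rewrite mule_ge0 // lee_fin powR_ge0.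
  move=> e c' hc'.
  have Zs0 : 0 <= zeta owner route ystar lamlim e by apply: zeta_ge0 => //; apply: ynn.
  have Zcvg : (fun k => zeta owner route (ybar (phi k)) (lam (phi k)) e) @ \oo
      --> zeta owner route ystar lamlim e.
    apply: (@zeta_cvg R E I Pth owner route _ _ _ (fun k => ybar (phi k)) (fun k => lam (phi k))) => [p|i].
      exact: ycv.
    exact: (cvg_comp _ _ phicvg (Hlam_cvg i)).
  apply: (@lower_edge R omega g (ge e) rho (alpha e) M _ _ _ phi
    (fun k => zeta owner route (ybar (phi k)) (lam (phi k)) e) (zeta owner route ystar lamlim e)
    (fun _ => True)
    Hg_pos Hg_rv (Halpha e) HM_pos HM_cvg (Hge_mono e) (Hge_nonneg e) Hrho (alpha0 e) Zs0
    phicvg Zcvg _ c' hc').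
  by move=> k _; apply: zeta_ge0 => //; apply: ynn.
have Gphi : (fun k => G (phi k) / g (M (phi k))) @ \oo --> v.
  exact: (cvg_comp _ _ phicvg Gcvg).
have Hlt : \forall k \near \oo, G (phi k) / g (M (phi k)) < c by exact: cvgr_lt _ Gphi c vc.
have [k [h1 h2]] := filter_ex (filterI Hs' Hlt).
have := h1 Logic.I; rewrite -ratioE ybopt => h3.
by move: (lt_trans h3 h2); rewrite ltxx.
Qed.
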